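(* For distinct $a,b\in\mathbb{B}^2$, $h_{\mathbb{B}^2}(a,b)=\log H$, where $$H=\frac{\operatorname{Re}\big((1-a\overline{b})^2\big)+|a-b|^2+2\,\operatorname{Re}(1-a\overline{b})\sqrt{|a-b|^2-\big(\operatorname{Im}(a\overline{b})\big)^2}}{(1-|a|^2)(1-|b|^2)}.$$
   Context: $\mathbb{B}^2$ is the open unit disk in $\mathbb{C}$. For distinct $a,b\in\mathbb{B}^2$ the Hilbert metric is $h_{\mathbb{B}^2}(a,b)=\log\frac{|u-b||a-v|}{|u-a||b-v|}$, where $u,v$ are the two intersection points of the line $L[a,b]$ through $a,b$ with the unit circle, labelled so that $|u-a|<|u-b|$. *)

(* Defs.v *)
From Stdlib Require Import Reals ClassicalEpsilon.
From Coquelicot Require Import Coquelicot.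
Open Scope R_scope.

Definition in_B2 (z : C) : Prop := Cmod z < 1.

Definition on_line (a b z : C) : Prop :=
  exists t : R, z = Cplus a (Cmult (RtoC t) (Cminus b a)).

Definition hilbert_ends (a b : C) (uv : C * C) : Prop :=
  let (u, v) := uv in
  on_line a b u /\ on_line a b v /\ Cmod u = 1 /\ Cmod v = 1 /\ u <> v /\
  Cmod (Cminus u a) < Cmod (Cminus u b).

Definition hilbert_uv (a b : C) : C * C :=
  epsilon (inhabits (RtoC 0, RtoC 0)) (hilbert_ends a b).

Definition hB2 (a b : C) : R :=
  let (u, v) := hilbert_uv a b in
  ln ((Cmod (Cminus u b) * Cmod (Cminus a v)) /
      (Cmod (Cminus u a) * Cmod (Cminus b v))).

(* Main.v *)
Require Import Defs.
From Stdlib Require Import Reals Lra Psatz ClassicalEpsilon.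
From Coquelicot Require Import Coquelicot.
Open Scope R_scope.

Lemma sqrt_scale k X : 0 <= X -> sqrt (k^2 * X) = Rabs k * sqrt X.
Proof.
  intros H. rewrite sqrt_mult_alt by nra. f_equal.
  rewrite <- sqrt_Rsqr_abs. unfold Rsqr. f_equal. ring.
Qed.

Lemma cm_C (z : C) k (d : C) : fst z = k * fst d -> snd z = k * snd d ->
  Cmod z = Rabs k * Cmod d.
Proof.
  destruct z as [x y], d as [d1 d2]; simpl; intros -> ->.
  unfold Cmod; simpl. rewrite <- sqrt_scale by nra. f_equal. ring.
Qed.

Lemma cmod1 (z : C) : Cmod z = 1 -> fst z * fst z + snd z * snd z = 1.
Proof.
  unfold Cmod. intros H.
  assert (h := sqrt_sqrt (fst z ^ 2 + snd z ^ 2)).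
  rewrite H in h. assert (0 <= fst z ^ 2 + snd z ^ 2) by nra.
  specialize (h H0). nra.
Qed.

Theorem mainTheorem5 (a b : C) :
  in_B2 a -> in_B2 b -> a <> b ->
  (exists uv : C * C, hilbert_ends a b uv) /\
  hB2 a b =
    ln ((Re (Cmult (Cminus 1 (Cmult a (Cconj b))) (Cminus 1 (Cmult a (Cconj b))))
         + (Cmod (Cminus a b)) ^ 2
         + 2 * Re (Cminus 1 (Cmult a (Cconj b)))
             * sqrt ((Cmod (Cminus a b)) ^ 2 - (Im (Cmult a (Cconj b))) ^ 2))
        / ((1 - (Cmod a) ^ 2) * (1 - (Cmod b) ^ 2))).
Proof.
  intros Ha Hb Hab.
  destruct a as [a1 a2], b as [b1 b2].
  assert (Ha' : a1*a1 + a2*a2 < 1).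
  { apply sqrt_lt_0_alt. rewrite sqrt_1.
    unfold in_B2, Cmod in Ha; simpl in Ha.
    replace (a1*a1+a2*a2) with (a1*(a1*1)+a2*(a2*1)) by ring. exact Ha. }
  assert (Hb' : b1*b1 + b2*b2 < 1).
  { apply sqrt_lt_0_alt. rewrite sqrt_1.
    unfold in_B2, Cmod in Hb; simpl in Hb.
    replace (b1*b1+b2*b2) with (b1*(b1*1)+b2*(b2*1)) by ring. exact Hb. }
  pose (A := (b1-a1)^2 + (b2-a2)^2).
  assert (HA : A > 0).
  { unfold A. destruct (Req_dec (b1-a1) 0); destruct (Req_dec (b2-a2) 0).
    - exfalso; apply Hab; f_equal; lra.
    - assert ((b2-a2)^2 > 0) by (apply pow2_gt_0; auto). nra.
    - assert ((b1-a1)^2 > 0) by (apply pow2_gt_0; auto). nra.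
    - assert ((b2-a2)^2 > 0) by (apply pow2_gt_0; auto). nra. }
  pose (B := a1*(b1-a1) + a2*(b2-a2)).
  pose (Cc := a1^2 + a2^2 - 1).
  pose (D := B^2 - A*Cc).
  assert (HD : D > 0) by (unfold D, Cc; nra).
  pose (s := sqrt D).
  assert (Hs0 : 0 < s) by (apply sqrt_lt_R0; lra).
  assert (Hss : s * s = D) by (apply sqrt_sqrt; lra).
  pose (t1 := (-B - s)/A). pose (t2 := (-B + s)/A).
  assert (H1 : A*t1 = -B - s) by (unfold t1; field; lra).
  assert (H2 : A*t2 = -B + s) by (unfold t2; field; lra).
  assert (Hp : forall t, A*t^2 + 2*B*t + Cc = A*(t-t1)*(t-t2)).
  { intro t.
    assert (e : A*(t-t1)*(t-t2) = A*t^2 - t*(A*t1 + A*t2) + (A*t1)*(A*t2)/A)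
      by (field; lra).
    rewrite e, H1, H2.
    replace ((-B-s)*(-B+s)) with (B^2 - s*s) by ring. rewrite Hss. unfold D.
    field. lra. }
  assert (HsB : s > B /\ s > -B).
  { unfold D, Cc in Hss. split; nra. }
  assert (Ht1 : t1 < 0) by nra.
  assert (Hp1 : A + 2*B + Cc < 0) by (unfold A, B, Cc; nra).
  assert (Ht2 : t2 > 1).
  { assert (s > A + B) by (unfold D in Hss; nra). nra. }
  pose (M := Cmod (Cminus (b1,b2) (a1,a2))).
  assert (HM : M > 0).
  { unfold M, Cmod; simpl. apply sqrt_lt_R0. unfold A in HA. nra. }
  pose (L := fun t => Cplus (a1,a2) (Cmult (RtoC t) (Cminus (b1,b2) (a1,a2)))).
  assert (Hroot : forall t, Cmod (L t) = 1 -> t = t1 \/ t = t2).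
  { intros t Ht. apply cmod1 in Ht. simpl in Ht.
    assert (Hz : A*t^2 + 2*B*t + Cc = 0) by (unfold A, B, Cc; nra).
    rewrite Hp in Hz.
    destruct (Rmult_integral _ _ Hz) as [Hz1|Hz1].
    - destruct (Rmult_integral _ _ Hz1) as [Hz2|Hz2]; [lra|left; lra].
    - right; lra. }
  assert (Hon : forall t, A*t^2 + 2*B*t + Cc = 0 -> Cmod (L t) = 1).
  { intros t Ht. unfold Cmod; simpl. transitivity (sqrt 1); [f_equal | apply sqrt_1].
    transitivity (A*t^2+2*B*t+Cc+1); [unfold L, A, B, Cc; simpl; ring | lra]. }
  assert (EuA : forall t, Cmod (Cminus (L t) (a1,a2)) = Rabs t * M).
  { intro t. apply cm_C; unfold L, M; simpl; ring. }
  assert (EuB : forall t, Cmod (Cminus (L t) (b1,b2)) = Rabs (t-1) * M).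
  { intro t. apply cm_C; unfold L, M; simpl; ring. }
  assert (EaV : forall t, Cmod (Cminus (a1,a2) (L t)) = Rabs (-t) * M).
  { intro t. apply cm_C; unfold L, M; simpl; ring. }
  assert (EbV : forall t, Cmod (Cminus (b1,b2) (L t)) = Rabs (1-t) * M).
  { intro t. apply cm_C; unfold L, M; simpl; ring. }
  assert (Hne : L t1 <> L t2).
  { intro H. assert (h := EuA t1). rewrite H, EuA in h.
    rewrite (Rabs_left t1) in h by lra. rewrite (Rabs_right t2) in h by lra.
    assert (h2 := EuB t1). rewrite H, EuB in h2.
    rewrite (Rabs_left (t1-1)) in h2 by lra. rewrite (Rabs_right (t2-1)) in h2 by lra. nra. }
  assert (Hex : exists uv : C * C, hilbert_ends (a1,a2) (b1,b2) uv).
  { exists (L t1, L t2). unfold hilbert_ends.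
    split; [exists t1; reflexivity|].
    split; [exists t2; reflexivity|].
    split; [apply Hon; rewrite Hp; ring|].
    split; [apply Hon; rewrite Hp; ring|].
    split; [exact Hne|].
    rewrite EuA, EuB. rewrite Rabs_left by lra. rewrite Rabs_left by lra. nra. }
  split; [exact Hex|].
  unfold hB2. destruct (hilbert_uv (a1,a2) (b1,b2)) as [u v] eqn:Huv.
  pose proof (epsilon_spec (inhabits (RtoC 0, RtoC 0)) _ Hex) as He.
  change (epsilon _ _) with (hilbert_uv (a1,a2) (b1,b2)) in He.
  rewrite Huv in He.
  destruct He as ([tu Hu] & [tv Hv] & Hu1 & Hv1 & Hneq & Hlt).
  change (Cplus (a1,a2) (Cmult (RtoC tu) (Cminus (b1,b2) (a1,a2)))) with (L tu) in Hu.
  change (Cplus (a1,a2) (Cmult (RtoC tv) (Cminus (b1,b2) (a1,a2)))) with (L tv) in Hv.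
  subst u v.
  assert (Htu : tu = t1).
  { destruct (Hroot tu Hu1) as [|Ht]; auto.
    rewrite EuA, EuB in Hlt.
    assert (Rabs tu < Rabs (tu - 1)) by (apply (Rmult_lt_reg_r M); lra).
    subst tu. rewrite Rabs_right in H by lra. rewrite Rabs_right in H by lra. lra. }
  subst tu.
  assert (Htv : tv = t2).
  { destruct (Hroot tv Hv1) as [Ht|]; auto. subst tv. congruence. }
  subst tv.
  rewrite EuB, EaV, EuA, EbV.
  rewrite (Rabs_left (t1 - 1)) by lra.
  rewrite (Rabs_left (- t2)) by lra.
  rewrite (Rabs_left t1) by lra.
  rewrite (Rabs_left (1 - t2)) by lra.
  apply f_equal.
  pose (E := 1 - (a1*b1 + a2*b2)).
  assert (HX : A*((1-t1)*t2) = E + s).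
  { apply (Rmult_eq_reg_l A); [| lra].
    replace (A*(A*((1-t1)*t2))) with ((A - A*t1)*(A*t2)) by ring.
    rewrite H1, H2. unfold D in Hss. unfold E, A, B, Cc in *. nra. }
  assert (HY : A*((-t1)*(t2-1)) = E - s).
  { apply (Rmult_eq_reg_l A); [| lra].
    replace (A*(A*((-t1)*(t2-1)))) with ((- (A*t1))*(A*t2 - A)) by ring.
    rewrite H1, H2. unfold D in Hss. unfold E, A, B, Cc in *. nra. }
  assert (HEs : E - s > 0) by nra.
  transitivity ((E + s)/(E - s)).
  { rewrite <- HX, <- HY. field. repeat split; lra. }
  assert (Hm : Cmod (Cminus (a1,a2) (b1,b2)) ^ 2 = A).
  { unfold Cmod. rewrite pow2_sqrt by (apply Rplus_le_le_0_compat; apply pow2_ge_0). simpl. unfold A. ring. }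
  assert (Hma : Cmod (a1,a2) ^ 2 = a1*a1+a2*a2).
  { unfold Cmod. rewrite pow2_sqrt by (apply Rplus_le_le_0_compat; apply pow2_ge_0). simpl. ring. }
  assert (Hmb : Cmod (b1,b2) ^ 2 = b1*b1+b2*b2).
  { unfold Cmod. rewrite pow2_sqrt by (apply Rplus_le_le_0_compat; apply pow2_ge_0). simpl. ring. }
  rewrite Hm, Hma, Hmb.
  assert (Hsq : A - (Im (Cmult (a1,a2) (Cconj (b1,b2))))^2 = D).
  { simpl. unfold D, A, B, Cc. ring. }
  rewrite Hsq. change (sqrt D) with s.
  simpl.
  match goal with |- _ = ?N / ?Dn =>
    replace N with ((E+s)*(E+s)); [replace Dn with ((E+s)*(E-s)) |] end.
  - field. lra.
  - unfold D in Hss. unfold E, A, B, Cc in *. nra.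
  - unfold D in Hss. unfold E, A, B, Cc in *. nra.
Qed.
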